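(* Let $x,y,z\in\mathbb{C}^*$ with $x^N+y^N=z^N$. Then for all $k,l\in\mathbb{Z}$ (whenever both sides are defined), $$\omega(x,y,z\,|\,k-l)=\frac{\omega^{kl}\,\omega^{-\frac{l^2}{2}-\frac{k^2}{2}}}{\omega\big(z,\,-\omega^{1/2}y,\,\omega x\,\big|\,l-k\big)}.$$
   Context: $N\ge3$ odd, $N=2P+1$, $\omega=e^{2\pi i/N}$; for integers $r$, $\omega^{r/2}:=(\omega^{P+1})^r$ (so $\omega^{1/2}=\omega^{P+1}=-e^{i\pi/N}$). For $x,y,z\in\mathbb{C}^*$ with $x^N+y^N=z^N$ and $n\in\{0,\dots,N-1\}$, $\omega(x,y,z|n)=\prod_{j=1}^n\frac{y}{z-x\omega^j}$; since the product over $j=1,\dots,N$ equals $1$, this is extended $N$-periodically to $n\in\mathbb{Z}$. (Note $z^N+(-\omega^{1/2}y)^N=(\omega x)^N$.) *)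

(* Defs.v *)
From HB Require Import structures.
From mathcomp Require Import all_boot all_order all_algebra.
From mathcomp Require Import complex.
From mathcomp Require Import reals trigo.
Unset Printing Implicit Defensive.
Import Order.TTheory GRing.Theory Num.Theory.
Local Open Scope ring_scope.
Local Open Scope complex_scope.

Definition omg (R : realType) (N : nat) : R[i] :=
  (cos (2 * pi / N%:R)) +i* (sin (2 * pi / N%:R)).

(* omega^{1/2} := omega^{P+1}, where N = 2P+1 *)
Definition omg_half (R : realType) (N : nat) : R[i] := omg R N ^+ (N./2).+1.

Definition wfun (R : realType) (N : nat) (x y z : R[i]) (n : int) : R[i] :=
  \prod_(1 <= j < (absz (n %% N%:Z)%Z).+1) (y / (z - x * omg R N ^+ j)).

(* Main.v *)
Require Import Defs.
From HB Require Import structures.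
From mathcomp Require Import all_boot all_order all_algebra.
From mathcomp Require Import complex.
From mathcomp Require Import reals trigo.
From mathcomp Require Import ring lra zify.
Import Order.TTheory GRing.Theory Num.Theory.
Local Open Scope ring_scope.

Lemma omgX (R : realType) (N j : nat) : omg R N ^+ j =
  Complex (cos (j%:R * (2 * pi / N%:R))) (sin (j%:R * (2 * pi / N%:R))).
Proof.
elim: j => [|j IH]; first by rewrite expr0 !mul0r cos0 sin0.
rewrite exprS IH /omg; set t := 2 * pi / N%:R.
rewrite -[j.+1]addn1 natrD mulrDl mul1r cosD sinD.
apply/eqP; rewrite eq_complex /=; apply/andP; split; apply/eqP; ring.
Qed.

Lemma omgN (R : realType) (N : nat) : (0 < N)%N -> omg R N ^+ N = 1.
Proof.
move=> N0; rewrite omgX.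
have -> : N%:R * (2 * pi / N%:R) = pi *+ 2 :> R.
  by rewrite mulr2n; field; rewrite pnatr_eq0 -lt0n.
by rewrite cos2pi sin2pi.
Qed.

Lemma cos1_sinhalf (R : realType) (v : R) : cos v = 1 -> sin (v / 2) = 0.
Proof.
move=> h; have := cos_mulr2n (v / 2).
have e : (v / 2) *+ 2 = v by rewrite mulr2n; field.
rewrite e h; set w := v / 2 => {}h.
have h2 : sin w ^+ 2 = 0.
  rewrite sin2cos2; move: h; set c := cos w ^+ 2; rewrite mulr2n => h; lra.
by move/eqP: h2; rewrite sqrf_eq0 => /eqP.
Qed.

Lemma omg_ne1 (R : realType) (N j : nat) : (0 < j < N)%N -> omg R N ^+ j != 1.
Proof.
move=> /andP[j0 jN]; rewrite omgX; apply/negP => /eqP [] /cos1_sinhalf h _.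
have Np : (0 < N%:R :> R) by rewrite ltr0n (ltn_trans j0).
have jp : (0 < j%:R :> R) by rewrite ltr0n.
have : (0 : R) < sin (j%:R * (2 * pi / N%:R) / 2).
  apply: sin_gt0_pi; apply/andP; split.
    by rewrite !mulr_gt0 ?invr_gt0 ?pi_gt0.
  have -> : (j%:R : R) * (2 * pi / N%:R) / 2 = pi * (j%:R / N%:R) by field; rewrite gt_eqF.
  by rewrite gtr_pMr ?pi_gt0 // ltr_pdivrMr // mul1r ltr_nat.
by rewrite h ltxx.
Qed.

Lemma omg_prim (R : realType) (N : nat) : (0 < N)%N -> N.-primitive_root (omg R N).
Proof.
move=> N0; apply/andP; split => //; apply/forallP => i; apply/eqP.
rewrite unity_rootE.
case: (ltngtP i.+1 N) => [lt||eq].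
- by rewrite (negbTE (@omg_ne1 R N i.+1 _)) ?lt // (ltn_eqF lt).
- by move=> /leq_trans /(_ (ltn_ord i)); rewrite ltnn.
- by rewrite eq omgN // eqxx.
Qed.

Lemma prod_all (R : realType) (N : nat) (x z : R[i]) : (0 < N)%N -> x != 0 ->
  \prod_(0 <= i < N) (z - x * omg R N ^+ i) = z ^+ N - x ^+ N.
Proof.
move=> N0 x0.
have := congr1 (fun p => p.[z / x]) (factor_Xn_sub_1 (@omg_prim R N N0)).
rewrite horner_prod /= !hornerE => h.
have -> : z ^+ N - x ^+ N = x ^+ N * ((z / x) ^+ N - 1).
  by rewrite mulrBr expr_div_n mulrCA divff ?expf_neq0 // mulr1 mulr1.
have -> : x ^+ N = \prod_(0 <= i < N) x by rewrite prodr_const_nat subn0.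
rewrite -h -big_split /=.
by apply: eq_bigr => i _; rewrite !hornerE mulrBr mulrCA divff // mulr1 mulrC.
Qed.

Definition P1 (R : realType) N (x y z : R[i]) n :=
  \prod_(1 <= j < n.+1) (y / (z - x * omg R N ^+ j)).
Definition P2 (R : realType) N (x y z : R[i]) m :=
  \prod_(1 <= j < m.+1) ((- omg_half R N * y) / (omg R N * x - z * omg R N ^+ j)).

Lemma half2 (R : realType) N : odd N -> omg_half R N ^+ 2 = omg R N.
Proof.
move=> oN; rewrite /omg_half -exprM.
have -> : ((N./2).+1 * 2 = N + 1)%N.
  have := odd_double_half N; rewrite oN -addnn => h.
  by rewrite -{2}h /=; lia.
by rewrite exprD omgN ?mul1r ?expr1 //; case: N oN.
Qed.

Lemma halfN (R : realType) N : (0 < N)%N -> omg_half R N ^+ N = 1.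
Proof. by move=> N0; rewrite /omg_half -exprM mulnC exprM omgN // expr1n. Qed.

Lemma P1N (R : realType) N (x y z : R[i]) : (0 < N)%N -> x != 0 -> y != 0 ->
  x ^+ N + y ^+ N = z ^+ N -> P1 R N x y z N = 1.
Proof.
move=> N0 x0 y0 hf; rewrite /P1 prodf_div prodr_const_nat subn1 /=.
rewrite big_nat_recr // omgN // -[X in x * X](expr0 (omg R N)) mulrC /=.
have e := @big_ltn _ _ *%R 0 N (fun j => z - x * omg R N ^+ j) N0.
rewrite [X in X^-1]mulrC -e prod_all //.
have -> : z ^+ N - x ^+ N = y ^+ N by rewrite -hf addrC addKr.
by rewrite mulVf // expf_neq0.
Qed.

Lemma step (R : realType) N (x y z : R[i]) m n : odd N -> (m.+1 + n = N)%N ->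
  ((- omg_half R N * y) / (omg R N * x - z * omg R N ^+ m.+1)) * omg_half R N ^+ (n ^ 2)
  = (y / (z - x * omg R N ^+ n.+1)) * omg_half R N ^+ (n.+1 ^ 2).
Proof.
move=> oN hmn.
have N0 : (0 < N)%N by rewrite -hmn.
set w := omg R N; set h := omg_half R N.
have ainv : (w ^+ m.+1)^-1 = w ^+ n by apply: mulr1_eq; rewrite -exprD hmn omgN.
have ab : w = w ^+ m.+1 * w ^+ n.+1.
  by rewrite -exprD addnS hmn exprS omgN // mulr1.
have e3 : h ^+ (n.+1 ^ 2) = h ^+ (n ^ 2) * w ^+ n * h.
  have -> : (n.+1 ^ 2 = n ^ 2 + 2 * n + 1)%N by rewrite !expnS !expn0; lia.
  rewrite exprD [h ^+ (_ + _)]exprD. by rewrite (exprM _ 2 n) /h /w half2 // expr1.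
rewrite e3.
move: ainv ab; set a := w ^+ m.+1; set b := w ^+ n.+1.
move: (w ^+ n) => c; clearbody a b w h => ainv ab.
have e : w * x - z * a = a * (b * x - z) by rewrite ab; ring.
have e2 : (b * x - z)^-1 = - (z - x * b)^-1 by rewrite -invrN opprB mulrC.
rewrite e invfM ainv e2; ring.
Qed.

Lemma key (R : realType) N (x y z : R[i]) : (0 < N)%N -> odd N -> x != 0 -> y != 0 ->
  x ^+ N + y ^+ N = z ^+ N -> forall m, (m <= N)%N ->
  P1 R N x y z (N - m) * P2 R N x y z m * omg_half R N ^+ ((N - m) ^ 2) = 1.
Proof.
move=> N0 oN x0 y0 hf; elim=> [|m IH] hm.
  rewrite subn0 P1N // /P2 big_geq // mul1r expnS expn1 exprM halfN //.
  by rewrite expr1n mulr1.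
have hm' : (m <= N)%N by apply: ltnW.
have e : (N - m = (N - m.+1).+1)%N by lia.
move: (IH hm'); rewrite e.
have hmn : (m.+1 + (N - m.+1) = N)%N by lia.
move: (N - m.+1)%N hmn => n hmn.
rewrite /P1 /P2 (@big_nat_recr _ _ _ n.+1 1) // (@big_nat_recr _ _ _ m.+1 1) //= => IHe.
apply: (etrans _ IHe).
have := @step R N x y z m n oN hmn.
set t2 := - omg_half R N * y / (omg R N * x - z * omg R N ^+ m.+1).
set t1 := y / (z - x * omg R N ^+ n.+1).
set H1 := omg_half R N ^+ (n ^ 2). set H2 := omg_half R N ^+ (n.+1 ^ 2).
set A := \prod_(1 <= j < n.+1) _. set B := \prod_(1 <= j < m.+1) _.
move=> st; rewrite (_ : A * (B * t2) * H1 = A * B * (t2 * H1)); last by ring.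
rewrite st; ring.
Qed.

Theorem lemma6p2 (R : realType) (N : nat) (hN3 : (3 <= N)%N) (hNodd : odd N)
  (x y z : R[i]) (hx : x != 0) (hy : y != 0) (hz : z != 0)
  (hfermat : x ^+ N + y ^+ N = z ^+ N) (k l : int) :
  wfun R N x y z (k - l) =
  omg R N ^ (k * l) * omg_half R N ^ (- (l ^+ 2) - k ^+ 2)
  / wfun R N z (- omg_half R N * y) (omg R N * x) (l - k).
Proof.
have N0 : (0 < N)%N by apply: leq_trans hN3.
have h0 : omg_half R N != 0.
  by apply/negP => /eqP e; move: (@halfN R N N0); rewrite e expr0n gtn_eqF // => /eqP; rewrite eq_sym oner_eq0.
have Nz : (N%:Z != 0) by rewrite -lt0n.
have dq := divz_eq (k - l) N.
have r0 : (0 <= (k - l) %% N)%Z by apply: modz_ge0.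
have rN : ((k - l) %% N < N)%Z by apply: ltz_pmod; rewrite ltz_nat.
have mE : ((l - k) %% N)%Z = if ((k - l) %% N)%Z == 0 then 0 else (N%:Z - ((k - l) %% N)%Z).
  have -> : l - k = - (k - l) by rewrite opprB.
  rewrite -modzNm; case: eqP => [->|ne]; first by rewrite oppr0 mod0z.
  rewrite -modzDr addrC modz_small //; apply/andP; split.
    by rewrite subr_ge0 ltW.
  by rewrite gtrBl lt_neqAle eq_sym; apply/andP; split; [apply/eqP|].
move: (((k - l) %/ N)%Z) dq => Q dq.
move: mE r0 rN dq; rewrite /wfun.
move: ((k - l) %% N)%Z => r mE r0 rN dq.
have [n rn] : exists n : nat, r = n%:Z by exists (absz r); rewrite abszE ger0_norm.
subst r; rewrite mE absz_nat.
have nN : (n < N)%N by rewrite -ltz_nat.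
pose m := if n == 0%N then 0%N else (N - n)%N.
have mE2 : absz (if n%:Z == 0 then 0 else N%:Z - n%:Z)%R = m.
  rewrite /m; case: (n =P 0%N) => [->|ne] //=.
  have -> : (n%:Z == 0) = false by apply/negP => /eqP [].
  by rewrite (subzn (ltnW nN)) absz_nat.
rewrite mE2.
have KEY : P1 R N x y z n * P2 R N x y z m * omg_half R N ^+ (n ^ 2) = 1.
  rewrite /m; case: (n =P 0%N) => [->|ne].
    by rewrite /P1 /P2 !big_geq // !mul1r expr0.
  have := @key R N x y z N0 hNodd hx hy hfermat (N - n) (leq_subr _ _).
  by rewrite subKn // ltnW.
have PREF : omg R N ^ (k * l) * omg_half R N ^ (- (l ^+ 2) - k ^+ 2) * omg_half R N ^+ (n ^ 2) = 1.
  rewrite -(@half2 R N hNodd) (exprnP (omg_half R N) 2) exprz_exp (exprnP (omg_half R N) (n ^ 2)) -!expfzDr //.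
  set q := - (Q * (Q * N%:Z + 2 * n%:Z)).
  have -> : 2 * (k * l) + (- l ^+ 2 - k ^+ 2) + Posz (n ^ 2) = N%:Z * q.
    have hk : k = l + (Q * N%:Z + n%:Z) by rewrite -dq; ring.
    rewrite /q hk PoszM; ring.
  by rewrite -exprz_exp -exprnP halfN // exp1rz.
move: KEY PREF.
set A := P1 R N x y z n; set B := P2 R N x y z m; set H := omg_half R N ^+ (n ^ 2).
set pref := _ * omg_half R N ^ _.
move=> KEY PREF.
have e1 : A = (B * H)^-1 by apply/esym/mulr1_eq; rewrite mulrC mulrA.
have e2 : pref = H^-1 by apply/esym/mulr1_eq; rewrite mulrC.
rewrite /A /P1 in e1; rewrite e1 e2 invfM mulrC /B /P2.
done.
Qed.
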